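(* Let $i\in\{1,2\}$ and consider $\mathrm{SU}(2)\times\mathbb{R}$ with the sub-Riemannian metric $d_i$ and its geodesics $\tilde\gamma_i(\alpha_1,\alpha_2,\alpha_3,\beta;t)$, $t\in\mathbb{R}$, as described in the context, with $\alpha_2\neq\pm1$. Then $\hat t>0$ is a conjugate time along $\tilde\gamma_i$ if and only if $$\sin\frac{w_i\hat t}{2}\Bigl(\sin\frac{w_i\hat t}{2}-\frac{w_i\hat t}{2}\cos\frac{w_i\hat t}{2}\Bigr)=0,$$ where $w_2=\sqrt{1-\alpha_2^2+\beta^2}$ and $w_1=\sqrt{1-\alpha_2^2+(\beta-\alpha_2)^2}$.
   Context: $\mathrm{SU}(2)\times\mathbb{R}$ is the group of matrices $(A,B,v)=\begin{pmatrix}A&B&0\\-\overline{B}&\overline{A}&0\\0&0&e^v\end{pmatrix}$, $A,B\in\mathbb{C}$, $|A|^2+|B|^2=1$, $v\in\mathbb{R}$, with identity $\mathrm{Id}$. Let $E_1=\tfrac12(e_{12}-e_{21})$, $E_2=\tfrac{i}{2}(e_{12}+e_{21})$, $E_3=\tfrac{i}{2}(e_{11}-e_{22})$, $E_4=e_{33}$ ($e_{jk}$ the $3\times3$ matrix units). Put $e_1=E_1$, $e_3=E_2$, $e_4=E_3$, and $e_2=E_4-E_3$ for $i=1$, $e_2=E_4$ for $i=2$. The metric $d_i$ is the left-invariant sub-Riemannian metric defined by the left-invariant distribution with value $\mathrm{span}(e_1,e_2,e_3)$ at $\mathrm{Id}$ and inner product making $e_1,e_2,e_3$ orthonormal. Its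 arclength-parametrized geodesics from $\mathrm{Id}$ are $\tilde\gamma_i(\alpha_1,\alpha_2,\alpha_3,\beta;t)=\exp(t(\alpha_1e_1+\alpha_2e_2+\alpha_3e_3+\beta e_4))\exp(-t\beta e_4)$ with $(\alpha_1,\alpha_2,\alpha_3)\in\mathbb{S}^2$, $\beta\in\mathbb{R}$; this defines the exponential map $\mathrm{Exp}_i:C\times\mathbb{R}_+\to\mathrm{SU}(2)\times\mathbb{R}$, $(\lambda,t)\mapsto\tilde\gamma_i(\lambda;t)$, where $C=\mathbb{S}^2\times\mathbb{R}\ni\lambda=(\alpha_1,\alpha_2,\alpha_3,\beta)$. A time $\hat t>0$ is a conjugate time along $\tilde\gamma_i(\lambda;\cdot)$ if the differential of $\mathrm{Exp}_i$ at $(\lambda,\hat t)$ is degenerate. *)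

(* Defs.v *)
From HB Require Import structures.
From mathcomp Require Import all_boot all_order all_algebra.
From mathcomp Require Import all_classical all_reals all_analysis.
Set Implicit Arguments. Unset Strict Implicit. Unset Printing Implicit Defensive.
Import Order.TTheory GRing.Theory Num.Theory numFieldNormedType.Exports.
Local Open Scope ring_scope.

(* Complex 3x3 matrices X + iY are represented by their realification,
   the real 6x6 matrix [[X, -Y], [Y, X]]; this is an injective
   R-algebra homomorphism commuting with the matrix exponential. *)
Definition cmx (R : realType) (X Y : 'M[R]_3) : 'M[R]_6 := block_mx X (- Y) Y X.

Definition unit3 (R : realType) (j k : nat) : 'M[R]_3 :=
  delta_mx (inord j.-1) (inord k.-1).

Definition E1 (R : realType) : 'M[R]_6 := cmx (2^-1 *: (unit3 R 1 2 - unit3 R 2 1)) 0.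
Definition E2 (R : realType) : 'M[R]_6 := cmx 0 (2^-1 *: (unit3 R 1 2 + unit3 R 2 1)).
Definition E3 (R : realType) : 'M[R]_6 := cmx 0 (2^-1 *: (unit3 R 1 1 - unit3 R 2 2)).
Definition E4 (R : realType) : 'M[R]_6 := cmx (unit3 R 3 3) 0.

Definition ee1 (R : realType) : 'M[R]_6 := E1 R.
Definition ee2 (R : realType) (i : nat) : 'M[R]_6 :=
  if i == 1%N then E4 R - E3 R else E4 R.
Definition ee3 (R : realType) : 'M[R]_6 := E2 R.
Definition ee4 (R : realType) : 'M[R]_6 := E3 R.

Definition mexp (R : realType) (M : 'M[R]_6) : 'M[R]_6 :=
  limn (series (fun k : nat => (k`!%:R)^-1 *: M ^+ k)).

Definition crd (R : realType) (p : 'rV[R]_5) (k : nat) : R := p ord0 (inord k).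

(* The exponential map Exp_i, extended to all of R^5 (a neighbourhood of
   C x R_+ = S^2 x R x R_+), with p = (alpha1, alpha2, alpha3, beta, t). *)
Definition Expi (R : realType) (i : nat) (p : 'rV[R]_5) : 'M[R]_6 :=
  let a1 := crd p 0 in let a2 := crd p 1 in let a3 := crd p 2 in
  let b := crd p 3 in let t := crd p 4 in
  mexp (t *: (a1 *: ee1 R + a2 *: ee2 R i + a3 *: ee3 R + b *: ee4 R))
  *m mexp ((- (t * b)) *: ee4 R).

(* tangent space of C x R_+ = S^2 x R x R_+ at p (p with alpha in S^2) *)
Definition tangentC (R : realType) (p v : 'rV[R]_5) : Prop :=
  crd p 0 * crd v 0 + crd p 1 * crd v 1 + crd p 2 * crd v 2 = 0.

(* t > 0 is a conjugate time along gamma_i(lambda; .) : the differential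
   of Exp_i at (lambda, t) (restricted to the tangent space of C x R_+)
   is degenerate, i.e. has a nontrivial kernel. *)
Definition conjugate_time (R : realType) (i : nat) (a1 a2 a3 b t : R) : Prop :=
  let p : 'rV[R]_5 := \row_(k < 5) [:: a1; a2; a3; b; t]`_k in
  exists v : 'rV[R]_5, v != 0 /\ tangentC p v /\ ('d (Expi i) p : 'rV[R]_5 -> 'M[R]_6) v = 0.

Definition wi (R : realType) (i : nat) (a2 b : R) : R :=
  if i == 1%N then Num.sqrt (1 - a2 ^+ 2 + (b - a2) ^+ 2)
  else Num.sqrt (1 - a2 ^+ 2 + b ^+ 2).

(* Main.v *)
Require Import Defs.
From HB Require Import structures.
From mathcomp Require Import all_boot all_order all_algebra.
From mathcomp Require Import all_classical all_reals all_analysis.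
From mathcomp Require Import ring lra.
Import Order.TTheory GRing.Theory Num.Theory numFieldNormedType.Exports.
Set Implicit Arguments. Unset Strict Implicit. Unset Printing Implicit Defensive.
Local Open Scope classical_set_scope.
Local Open Scope ring_scope.

Section M3.
Variable R : realType.
Local Notation u := (unit3 R).

Definition mk (f : nat -> nat -> R) : 'M[R]_3 := \matrix_(i, j) f i j.

Definition XX a b e : 'M[R]_3 := mk (fun i j => match i, j with
  | 0%N, 0%N => a | 0%N, 1%N => b | 1%N, 0%N => - b | 1%N, 1%N => a | 2%N, 2%N => e | _, _ => 0 end).
Definition YY c d : 'M[R]_3 := mk (fun i j => match i, j with
  | 0%N, 0%N => d | 0%N, 1%N => c | 1%N, 0%N => c | 1%N, 1%N => - d | _, _ => 0 end).

Ltac m3 := apply/matrixP; case=> [[|[|[|?]]] ?] //; case=> [[|[|[|?]]] ?] //;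
  rewrite !mxE ?big_ord_recr ?big_ord0 /= ?mxE /=; ring.

Lemma XXYY_re a b c d e a' b' c' d' e' :
  XX a b e *m XX a' b' e' - YY c d *m YY c' d' =
  XX (a * a' - b * b' - c * c' - d * d') (a * b' + b * a' + c * d' - d * c') (e * e').
Proof. rewrite /XX /YY /mk; m3. Qed.

Lemma XXYY_im a b c d e a' b' c' d' e' :
  XX a b e *m YY c' d' + YY c d *m XX a' b' e' =
  YY (a * c' - b * d' + c * a' + d * b') (a * d' + b * c' - c * b' + d * a').
Proof. rewrite /XX /YY /mk; m3. Qed.

Lemma XXD a b e a' b' e' : XX a b e + XX a' b' e' = XX (a + a') (b + b') (e + e').
Proof. rewrite /XX /mk; m3. Qed.
Lemma YYD c d c' d' : YY c d + YY c' d' = YY (c + c') (d + d').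
Proof. rewrite /YY /mk; m3. Qed.
Lemma XXZ k a b e : k *: XX a b e = XX (k * a) (k * b) (k * e).
Proof. rewrite /XX /mk; m3. Qed.
Lemma YYZ k c d : k *: YY c d = YY (k * c) (k * d).
Proof. rewrite /YY /mk; m3. Qed.
Lemma XXN a b e : - XX a b e = XX (- a) (- b) (- e).
Proof. rewrite /XX /mk; m3. Qed.
Lemma YYN c d : - YY c d = YY (- c) (- d).
Proof. rewrite /YY /mk; m3. Qed.
Lemma XX1 : XX 1 0 1 = 1%:M.
Proof. rewrite /XX /mk; m3. Qed.
Lemma YY0 : YY 0 0 = 0.
Proof. rewrite /YY /mk; m3. Qed.
Lemma XX0 : XX 0 0 0 = 0.
Proof. rewrite /XX /mk; m3. Qed.

Ltac m3u := apply/matrixP; case=> [[|[|[|?]]] ?] //; case=> [[|[|[|?]]] ?] //;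
  rewrite /unit3 !mxE /=; rewrite -?(inj_eq val_inj) /= ?inordK //=; ring.

Lemma XXE1 : XX 0 (2^-1) 0 = 2^-1 *: (u 1 2 - u 2 1).
Proof. rewrite /XX /mk; m3u. Qed.
Lemma XXE4 : XX 0 0 1 = u 3 3.
Proof. rewrite /XX /mk; m3u. Qed.
Lemma YYE2 : YY (2^-1) 0 = 2^-1 *: (u 1 2 + u 2 1).
Proof. rewrite /YY /mk; m3u. Qed.
Lemma YYE3 : YY 0 (2^-1) = 2^-1 *: (u 1 1 - u 2 2).
Proof. rewrite /YY /mk; m3u. Qed.
End M3.


Section M6.
Variable R : realType.
Definition FF (a b c d e : R) : 'M[R]_6 := cmx (XX a b e) (YY c d).

Lemma FFM a b c d e a' b' c' d' e' :
  FF a b c d e *m FF a' b' c' d' e' =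
  FF (a * a' - b * b' - c * c' - d * d') (a * b' + b * a' + c * d' - d * c')
     (a * c' - b * d' + c * a' + d * b') (a * d' + b * c' - c * b' + d * a') (e * e').
Proof.
rewrite /FF /cmx (@mulmx_block _ 3 3 3 3 3 3) !mulmxN !mulNmx.
rewrite -(XXYY_re a b c d e a' b' c' d' e') -(XXYY_im a b c d e a' b' c' d' e').
rewrite opprD; f_equal; by rewrite addrC.
Qed.

Lemma FFD a b c d e a' b' c' d' e' :
  FF a b c d e + FF a' b' c' d' e' = FF (a + a') (b + b') (c + c') (d + d') (e + e').
Proof.
by rewrite /FF /cmx (@add_block_mx _ 3 3 3 3) XXD YYD -opprD YYD.
Qed.

Lemma FFZ k a b c d e : k *: FF a b c d e = FF (k * a) (k * b) (k * c) (k * d) (k * e).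
Proof. by rewrite /FF /cmx (@scale_block_mx _ 3 3 3 3) XXZ YYZ scalerN YYZ. Qed.

Lemma FFN a b c d e : - FF a b c d e = FF (- a) (- b) (- c) (- d) (- e).
Proof. by rewrite /FF /cmx (@opp_block_mx _ 3 3 3 3) XXN YYN. Qed.

Lemma FFB a b c d e a' b' c' d' e' :
  FF a b c d e - FF a' b' c' d' e' = FF (a - a') (b - b') (c - c') (d - d') (e - e').
Proof. by rewrite FFN FFD. Qed.

Lemma FF0 : FF 0 0 0 0 0 = 0.
Proof. by rewrite /FF /cmx XX0 YY0 oppr0 (@block_mx0 _ 3 3 3 3). Qed.

Lemma FF1 : FF 1 0 0 0 1 = 1.
Proof. by rewrite /FF /cmx XX1 YY0 oppr0 -(@scalar_mx_block _ 3 3). Qed.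

Lemma E1FF : E1 R = FF 0 (2^-1) 0 0 0.
Proof. by rewrite /E1 /FF XXE1 YY0. Qed.
Lemma E2FF : E2 R = FF 0 0 (2^-1) 0 0.
Proof. by rewrite /E2 /FF XX0 YYE2. Qed.
Lemma E3FF : E3 R = FF 0 0 0 (2^-1) 0.
Proof. by rewrite /E3 /FF XX0 YYE3. Qed.
Lemma E4FF : E4 R = FF 0 0 0 0 1.
Proof. by rewrite /E4 /FF XXE4 YY0. Qed.
End M6.

Section T.
Variable R : realType.
Lemma cvg_cos (x : R) : series (cos_coeff x) @ \oo --> cos x.
Proof. by rewrite unlock; exact: is_cvg_series_cos_coeff. Qed.
Lemma cvg_sin (x : R) : series (sin_coeff x) @ \oo --> sin x.
Proof. by rewrite unlock; exact: is_cvg_series_sin_coeff. Qed.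
Lemma cvg_exp (x : R) : series (exp_coeff x) @ \oo --> expR x.
Proof. exact: is_cvg_series_exp_coeff. Qed.

Definition ca (x : R) k := cos_coeff x k * k`!%:R.
Definition sa (x : R) k := sin_coeff x k * k`!%:R.

Lemma caE x k : ca x k = (~~ odd k)%:R * (-1) ^+ k./2 * x ^+ k.
Proof. rewrite /ca /cos_coeff /= mulfVK //. Qed.
Lemma saE x k : sa x k = (odd k)%:R * (-1) ^+ k.-1./2 * x ^+ k.
Proof. rewrite /sa /sin_coeff /= mulfVK //. Qed.

Lemma caS x k : ca x k.+1 = - x * sa x k.
Proof.
rewrite caE saE /= negbK exprS.
case: (boolP (odd k)) => ok; last by rewrite !mul0r mulr0.
have [m km] : exists m, k = m.*2.+1.
  by exists k./2; rewrite -[k in LHS]odd_double_half ok add1n.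
rewrite km /= doubleK exprS; ring.
Qed.

Lemma saS x k : sa x k.+1 = x * ca x k.
Proof. rewrite caE saE /= exprS; ring. Qed.

Lemma ca0 x : ca x 0 = 1. Proof. by rewrite caE /= !mul1r. Qed.
Lemma sa0 x : sa x 0 = 0. Proof. by rewrite saE /= !mul0r. Qed.

Lemma powFF (th tau n1 n2 n3 : R) (hn : n1 ^+ 2 + n2 ^+ 2 + n3 ^+ 2 = 1) k :
  (FF 0 (th * n1) (th * n2) (th * n3) tau) ^+ k =
  FF (ca th k) (sa th k * n1) (sa th k * n2) (sa th k * n3) (tau ^+ k).
Proof.
elim: k => [|k IH].
  by rewrite expr0 ca0 sa0 !mul0r expr0 FF1.
rewrite exprSr IH -mulmxE FFM caS saS.
congr FF; try ring.
  2: by rewrite exprSr.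
rewrite -[X in _ = X]mulr1 -hn; ring.
Qed.

Lemma mexpFF (th tau n1 n2 n3 : R) (hn : n1 ^+ 2 + n2 ^+ 2 + n3 ^+ 2 = 1) :
  mexp (FF 0 (th * n1) (th * n2) (th * n3) tau) =
  FF (cos th) (sin th * n1) (sin th * n2) (sin th * n3) (expR tau).
Proof.
rewrite /mexp.
set M := FF _ _ _ _ _.
have sE : forall n, series (fun k : nat => (k`!%:R)^-1 *: M ^+ k) n =
   FF (series (cos_coeff th) n) (series (sin_coeff th) n * n1)
      (series (sin_coeff th) n * n2) (series (sin_coeff th) n * n3)
      (series (exp_coeff tau) n).
  elim=> [|n IH].
    by rewrite /series /= !big_geq // !mul0r FF0.
  move: IH; rewrite /series /= => IH.
  rewrite !big_nat_recr //= IH /M powFF // FFZ FFD.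
  have kf : (n`!%:R : R) != 0 by rewrite pnatr_eq0 -lt0n fact_gt0.
  congr FF; rewrite /ca /sa /exp_coeff /=; field.
  all: try exact: kf.
have FFlin : forall a b c d e : R, FF a b c d e = a *: FF 1 0 0 0 0 + b *: FF 0 1 0 0 0
   + c *: FF 0 0 1 0 0 + d *: FF 0 0 0 1 0 + e *: FF 0 0 0 0 1.
  by move=> a b c d e; rewrite !FFZ !FFD; congr FF; ring.
apply: (cvg_lim (@norm_hausdorff _ _)).
have sE' := boolp.funext sE.
rewrite sE' FFlin.
under eq_fun do rewrite FFlin.
apply: cvgD; first apply: cvgD; first apply: cvgD; first apply: cvgD.
- by apply: cvgZr_tmp; exact: cvg_cos.
- by apply: cvgZr_tmp; apply: cvgMr_tmp; exact: cvg_sin.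
- by apply: cvgZr_tmp; apply: cvgMr_tmp; exact: cvg_sin.
- by apply: cvgZr_tmp; apply: cvgMr_tmp; exact: cvg_sin.
- by apply: cvgZr_tmp; exact: cvg_exp.
Qed.
End T.

Section CF.
Variable R : realType.
Variable i : nat.
Implicit Types p : 'rV[R]_5.
Definition cc : R := if i == 1%N then 1 else 0.
Definition yf1 p := crd p 4 * crd p 0 / 2.
Definition yf2 p := crd p 4 * crd p 2 / 2.
Definition yf3 p := crd p 4 * (crd p 3 - cc * crd p 1) / 2.
Definition rhof p := Num.sqrt (yf1 p * yf1 p + yf2 p * yf2 p + yf3 p * yf3 p).
Definition sgf p := sin (rhof p) * (rhof p)^-1.
Definition thf p := crd p 4 * crd p 3 / 2.
Definition tauf p := crd p 4 * crd p 1.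
Definition q0 p := cos (rhof p) * cos (thf p) + sgf p * sin (thf p) * yf3 p.
Definition q1 p := sgf p * cos (thf p) * yf1 p - sgf p * sin (thf p) * yf2 p.
Definition q2 p := sgf p * cos (thf p) * yf2 p + sgf p * sin (thf p) * yf1 p.
Definition q3 p := sgf p * cos (thf p) * yf3 p - cos (rhof p) * sin (thf p).
Definition ef p := expR (tauf p).

Lemma expo_FF p :
  crd p 4 *: (crd p 0 *: ee1 R + crd p 1 *: ee2 R i + crd p 2 *: ee3 R + crd p 3 *: ee4 R)
  = FF 0 (yf1 p) (yf2 p) (yf3 p) (tauf p).
Proof.
rewrite /ee1 /ee2 /ee3 /ee4 /yf1 /yf2 /yf3 /tauf /cc.
case: (i == 1%N); rewrite ?E1FF ?E2FF ?E3FF ?E4FF ?FFB !FFZ ?FFB !FFD ?FFZ;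
  congr FF; ring.
Qed.


Lemma expo2_FF p : (- (crd p 4 * crd p 3)) *: ee4 R = FF 0 (thf p * 0) (thf p * 0) (thf p * (-1)) 0.
Proof. rewrite /ee4 E3FF FFZ /thf; congr FF; ring. Qed.

Lemma sum3_eq0 (x y z : R) : x * x + y * y + z * z = 0 -> x = 0 /\ y = 0 /\ z = 0.
Proof.
move=> h.
have h1 := sqr_ge0 x; have h2 := sqr_ge0 y; have h3 := sqr_ge0 z.
rewrite !expr2 in h1 h2 h3.
have e1 : x * x = 0 by lra.
have e2 : y * y = 0 by lra.
have e3 : z * z = 0 by lra.
move: e1 e2 e3 => /eqP; rewrite mulf_eq0 orbb => /eqP -> /eqP.
by rewrite mulf_eq0 orbb => /eqP -> /eqP; rewrite mulf_eq0 orbb => /eqP ->.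
Qed.

Lemma Expi_closed p : Expi i p = FF (q0 p) (q1 p) (q2 p) (q3 p) (ef p).
Proof.
rewrite /Expi /= expo_FF expo2_FF mexpFF; last by ring.
have [r0|r0] := eqVneq (rhof p) 0.
  have hy : yf1 p = 0 /\ yf2 p = 0 /\ yf3 p = 0.
    apply: sum3_eq0; move: r0; rewrite /rhof => /eqP; rewrite sqrtr_eq0 => hle.
    apply/eqP; rewrite eq_le hle /=.
    by rewrite -!expr2 !addr_ge0 ?sqr_ge0.
  have -> : FF 0 (yf1 p) (yf2 p) (yf3 p) (tauf p) = FF 0 (0 * 1) (0 * 0) (0 * 0) (tauf p).
    by case: hy => -> [-> ->]; congr FF; ring.
  rewrite mexpFF; last by ring.
  rewrite FFM /q0 /q1 /q2 /q3 /sgf /ef r0; case: hy => -> [-> ->].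
  rewrite cos0 sin0 expR0; congr FF; ring.
have hq : 0 <= yf1 p * yf1 p + yf2 p * yf2 p + yf3 p * yf3 p.
  by rewrite -!expr2 !addr_ge0 ?sqr_ge0.
have rr : rhof p * rhof p = yf1 p * yf1 p + yf2 p * yf2 p + yf3 p * yf3 p.
  by rewrite /rhof -expr2 sqr_sqrtr.
have -> : FF 0 (yf1 p) (yf2 p) (yf3 p) (tauf p) =
  FF 0 (rhof p * (yf1 p / rhof p)) (rhof p * (yf2 p / rhof p)) (rhof p * (yf3 p / rhof p)) (tauf p).
  by congr FF; field.
rewrite mexpFF; last first.
  move: rr r0; set Y1 := yf1 p; set Y2 := yf2 p; set Y3 := yf3 p; set r := rhof p => rr r0.
  clearbody Y1 Y2 Y3 r.
  by rewrite !expr_div_n -!mulrDl !expr2 -rr mulfV // mulf_neq0.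
rewrite FFM /q0 /q1 /q2 /q3 /sgf /ef expR0; congr FF; field.
all: by [].
Qed.
End CF.

Section HD.
Context {R : realType} {V : normedModType R}.
Definition HD {W : normedModType R} (f : V -> W) x v df :=
  differentiable f x /\ 'd f x v = df.

Lemma HD_add {W : normedModType R} (f g : V -> W) x v df dg : HD f x v df -> HD g x v dg ->
  HD (fun p => f p + g p) x v (df + dg).
Proof.
move=> [f1 f2] [g1 g2]; split; first exact: (differentiableD f1 g1).
by rewrite (diffD f1 g1) /= f2 g2.
Qed.

Lemma HD_cst {W : normedModType R} (c : W) x v : HD (fun _ => c) x v 0.
Proof. split; first exact: differentiable_cst. by rewrite (diff_cst c x). Qed.

Lemma HD_opp {W : normedModType R} (f : V -> W) x v df : HD f x v df ->
  HD (fun p => - f p) x v (- df).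
Proof.
move=> [f1 f2]; split; first exact: (differentiableN f1).
by rewrite (diffN f1) -f2.
Qed.

Lemma HD_mul (f g : V -> R) x v df dg : HD f x v df -> HD g x v dg ->
  HD (fun p => f p * g p) x v (f x * dg + g x * df).
Proof.
move=> [f1 f2] [g1 g2]; split; first exact: (differentiableM f1 g1).
by rewrite (diffM f1 g1) -f2 -g2.
Qed.

Lemma HD_scalel {W : normedModType R} (f : V -> R) (C : W) x v df : HD f x v df ->
  HD (fun p => f p *: C) x v (df *: C).
Proof.
move=> [f1 f2]; split; first exact: (differentiableZl C f1).
by rewrite (diffZl C f1) -f2.
Qed.

Lemma HD_comp1 (f : V -> R) (g : R -> R) x v df dg :
  HD f x v df -> is_derive (f x) 1 g dg ->
  HD (fun p => g (f p)) x v (dg * df).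
Proof.
move=> [f1 f2] gd.
have gdv : derivable g (f x) 1 by case: gd.
have g1 : differentiable g (f x) by apply/derivable1_diffP.
split; first exact: (differentiable_comp f1 g1).
rewrite (diff_comp f1 g1) /= f2.
have dgE : 'D_1 g (f x) = dg by case: gd.
rewrite (deriv1E gdv) /= derive1E dgE.
by rewrite mulrC.
Qed.

Lemma HD_inv (f : V -> R) x v df : HD f x v df -> f x != 0 ->
  HD (fun p => (f p)^-1) x v (- df / (f x) ^+ 2).
Proof.
move=> [f1 f2] fx0; split; first exact: (differentiableV f1 fx0).
rewrite (diffV f1 fx0) -f2 /=.
by rewrite /= mulNr mulrC scaleNr.
Qed.

End HD.
Lemma HD_crd (R : realType) (x v : 'rV[R]_5) k :
  HD (fun p : 'rV[R]_5 => crd p k) x v (crd v k).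
Proof.
have @f : {linear 'rV[R]_5 -> R}.
  by exists (fun N : 'rV[R]_5 => N ord0 (inord k)); do 2![eexists]; do ?[constructor];
     rewrite ?mxE// => ? *; rewrite ?mxE//; move=> ?; rewrite !mxE.
rewrite /crd (_ : (fun _ => _) = f) //.
have fc : continuous f by exact: coord_continuous.
split; first exact/linear_differentiable.
by rewrite diff_lin.
Qed.

Lemma HD_eqd (R : realType) (V W : normedModType R) (f : V -> W) x v d d' :
  HD f x v d -> d = d' -> HD f x v d'.
Proof. by move=> h <-. Qed.

Lemma HD_sin (R : realType) (V : normedModType R) (f : V -> R) x v df :
  HD f x v df -> HD (fun p => sin (f p)) x v (cos (f x) * df).
Proof. move=> h; apply: (HD_comp1 h); exact: is_derive_sin. Qed.
Lemma HD_cos (R : realType) (V : normedModType R) (f : V -> R) x v df :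
  HD f x v df -> HD (fun p => cos (f p)) x v (- sin (f x) * df).
Proof. move=> h; apply: (HD_comp1 h); exact: is_derive_cos. Qed.
Lemma HD_expR (R : realType) (V : normedModType R) (f : V -> R) x v df :
  HD f x v df -> HD (fun p => expR (f p)) x v (expR (f x) * df).
Proof. move=> h; apply: (HD_comp1 h); exact: is_derive_expR. Qed.
Lemma HD_sqrt (R : realType) (V : normedModType R) (f : V -> R) x v df :
  HD f x v df -> 0 < f x -> HD (fun p => Num.sqrt (f p)) x v ((2 * Num.sqrt (f x))^-1 * df).
Proof. move=> h hp; apply: (HD_comp1 h); exact: is_derive1_sqrt. Qed.

Ltac hd := repeat (first [ apply: HD_add | apply: HD_mul | apply: HD_opp | apply: HD_crd
   | apply: HD_cst | apply: HD_sin | apply: HD_cos | apply: HD_expR ]).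

Section Der.
Variable R : realType.
Variable i : nat.
Variables x v : 'rV[R]_5.
Definition h1 := (crd v 4 * crd x 0 + crd x 4 * crd v 0) / 2.
Definition h2 := (crd v 4 * crd x 2 + crd x 4 * crd v 2) / 2.
Definition h3 := (crd v 4 * (crd x 3 - cc R i * crd x 1) + crd x 4 * (crd v 3 - cc R i * crd v 1)) / 2.
Definition dT := (crd v 4 * crd x 3 + crd x 4 * crd v 3) / 2.
Definition dtau := crd v 4 * crd x 1 + crd x 4 * crd v 1.

Lemma HD_yf1 : HD (@yf1 R) x v h1.
Proof. eapply HD_eqd; first by rewrite /yf1; hd. rewrite /h1; ring. Qed.
Lemma HD_yf2 : HD (@yf2 R) x v h2.
Proof. eapply HD_eqd; first by rewrite /yf2; hd. rewrite /h2; ring. Qed.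
Lemma HD_yf3 : HD (@yf3 R i) x v h3.
Proof. eapply HD_eqd; first by rewrite /yf3; hd. rewrite /h3; ring. Qed.
Lemma HD_thf : HD (@thf R) x v dT.
Proof. eapply HD_eqd; first by rewrite /thf; hd. rewrite /dT; ring. Qed.
Lemma HD_tauf : HD (@tauf R) x v dtau.
Proof. eapply HD_eqd; first by rewrite /tauf; hd. rewrite /dtau; ring. Qed.

Local Notation Y1 := (yf1 x).
Local Notation Y2 := (yf2 x).
Local Notation Y3 := (yf3 i x).
Local Notation r := (rhof i x).
Local Notation sg := (sgf i x).
Local Notation S1 := (sin (rhof i x)).
Local Notation C1 := (cos (rhof i x)).
Local Notation S2 := (sin (thf x)).
Local Notation C2 := (cos (thf x)).

Definition dr := (Y1 * h1 + Y2 * h2 + Y3 * h3) / r.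
Definition dsg := C1 * dr / r - S1 * dr / (r * r).
Definition dq0 := - S1 * dr * C2 - C1 * S2 * dT + (dsg * S2 + sg * C2 * dT) * Y3 + sg * S2 * h3.
Definition dq1 := (dsg * C2 - sg * S2 * dT) * Y1 + sg * C2 * h1 - (dsg * S2 + sg * C2 * dT) * Y2 - sg * S2 * h2.
Definition dq2 := (dsg * C2 - sg * S2 * dT) * Y2 + sg * C2 * h2 + (dsg * S2 + sg * C2 * dT) * Y1 + sg * S2 * h1.
Definition dq3 := (dsg * C2 - sg * S2 * dT) * Y3 + sg * C2 * h3 - (- S1 * dr * S2 + C1 * C2 * dT).
Definition de := expR (tauf x) * dtau.

Hypothesis hpos : 0 < Y1 * Y1 + Y2 * Y2 + Y3 * Y3.

Lemma r_neq0 : r != 0.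
Proof. by rewrite /rhof sqrtr_eq0 -ltNge. Qed.

Lemma HD_rhof : HD (@rhof R i) x v dr.
Proof.
eapply HD_eqd.
  rewrite /rhof; apply: HD_sqrt; last exact: hpos.
  apply: HD_add; first apply: HD_add.
  - by apply: HD_mul; apply: HD_yf1.
  - by apply: HD_mul; apply: HD_yf2.
  - by apply: HD_mul; apply: HD_yf3.
have := r_neq0; rewrite /dr /rhof => hr.
field; exact: hr.
Qed.

Lemma HD_sgf : HD (@sgf R i) x v dsg.
Proof.
have hr := r_neq0.
eapply HD_eqd.
  rewrite /sgf; apply: HD_mul.
    by apply: HD_sin; exact: HD_rhof.
  by apply: HD_inv; [exact: HD_rhof | exact: hr].
rewrite /dsg; field; exact: hr.
Qed.

Ltac hd2 := repeat (first [ apply: HD_yf1 | apply: HD_yf2 | apply: HD_yf3 | apply: HD_thf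
   | apply: HD_tauf | apply: HD_rhof | apply: HD_sgf
   | apply: HD_add | apply: HD_mul | apply: HD_opp
   | apply: HD_sin | apply: HD_cos | apply: HD_expR ]).

Lemma HD_q0 : HD (@q0 R i) x v dq0.
Proof. eapply HD_eqd; first by rewrite /q0; hd2. rewrite /dq0; ring. Qed.
Lemma HD_q1 : HD (@q1 R i) x v dq1.
Proof. eapply HD_eqd; first by rewrite /q1; hd2. rewrite /dq1; ring. Qed.
Lemma HD_q2 : HD (@q2 R i) x v dq2.
Proof. eapply HD_eqd; first by rewrite /q2; hd2. rewrite /dq2; ring. Qed.
Lemma HD_q3 : HD (@q3 R i) x v dq3.
Proof. eapply HD_eqd; first by rewrite /q3; hd2. rewrite /dq3; ring. Qed.
Lemma HD_ef : HD (@ef R) x v de.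
Proof. eapply HD_eqd; first by rewrite /ef; hd2. rewrite /de; ring. Qed.
End Der.

Lemma FF_eq0 (R : realType) (a b c d e : R) : FF a b c d e = 0 ->
  [/\ a = 0, b = 0, c = 0, d = 0 & e = 0].
Proof.
move=> h.
have E := fun (i j : 'I_(3 + 3)) => congr1 (fun M : 'M[R]_(3 + 3) => M i j) h.
pose o0 := @Ordinal 3 0 isT; pose o1 := @Ordinal 3 1 isT; pose o2 := @Ordinal 3 2 isT.
have := E (lshift 3 o0) (lshift 3 o0).
have := E (lshift 3 o0) (lshift 3 o1).
have := E (lshift 3 o0) (rshift 3 o1).
have := E (lshift 3 o0) (rshift 3 o0).
have := E (lshift 3 o2) (lshift 3 o2).
rewrite /FF /cmx ?block_mxEul ?block_mxEur /XX /YY /mk !mxE /=.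
move=> ? hd hc ? ?; split=> //.
  by rewrite -[c]opprK hc oppr0.
by rewrite -[d]opprK hd oppr0.
Qed.

Section Alg.
Variable R : realType.
Variables a1 a2 a3 b t c d1 d2 d3 db dt r S1 C1 S2 C2 : R.
Local Notation Y1 := (t * a1 / 2).
Local Notation Y2 := (t * a3 / 2).
Local Notation Y3 := (t * (b - c * a2) / 2).
Local Notation h1 := ((dt * a1 + t * d1) / 2).
Local Notation h2 := ((dt * a3 + t * d3) / 2).
Local Notation h3 := ((dt * (b - c * a2) + t * (db - c * d2)) / 2).
Local Notation dT := ((dt * b + t * db) / 2).
Local Notation dtau := (dt * a2 + t * d2).
Local Notation dr := ((Y1 * h1 + Y2 * h2 + Y3 * h3) / r).
Local Notation sg := (S1 * r^-1).
Local Notation dsg := (C1 * dr / r - S1 * dr / (r * r)).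
Local Notation dq0 := (- S1 * dr * C2 - C1 * S2 * dT + (dsg * S2 + sg * C2 * dT) * Y3 + sg * S2 * h3).
Local Notation dq1 := ((dsg * C2 - sg * S2 * dT) * Y1 + sg * C2 * h1 - (dsg * S2 + sg * C2 * dT) * Y2 - sg * S2 * h2).
Local Notation dq2 := ((dsg * C2 - sg * S2 * dT) * Y2 + sg * C2 * h2 + (dsg * S2 + sg * C2 * dT) * Y1 + sg * S2 * h1).
Local Notation dq3 := ((dsg * C2 - sg * S2 * dT) * Y3 + sg * C2 * h3 - (- S1 * dr * S2 + C1 * C2 * dT)).

Lemma alg_fwd : 0 < t -> 0 < r -> C2 ^+ 2 + S2 ^+ 2 = 1 ->
  a1 ^+ 2 + a2 ^+ 2 + a3 ^+ 2 = 1 -> 0 < a1 ^+ 2 + a3 ^+ 2 -> S1 != 0 -> S1 - r * C1 != 0 ->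
  dq0 = 0 -> dq1 = 0 -> dq2 = 0 -> dq3 = 0 -> dtau = 0 -> a1 * d1 + a2 * d2 + a3 * d3 = 0 ->
  [/\ d1 = 0, d2 = 0, d3 = 0, db = 0 & dt = 0].
Proof.
move=> ht hr hC hS h13 hS1 hS1r e0 e1 e2 e3 etau etg.
have r0 : r != 0 by rewrite gt_eqF.
have h3E : h3 = dT.
  have -> : h3 = dT - c * dtau / 2 by ring.
  by rewrite etau mulr0 mul0r subr0.
set W0 : R := - S1 * dr + dT * sg * Y3.
set W1 : R := dsg * Y1 + sg * h1 - dT * sg * Y2.
set W2 : R := dsg * Y2 + sg * h2 + dT * sg * Y1.
set W3 : R := dsg * Y3 + sg * h3 - dT * C1.
have hW0 : W0 = 0.
  have : W0 * (C2 ^+ 2 + S2 ^+ 2) = dq0 * C2 - dq3 * S2 by rewrite /W0; ring.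
  by rewrite hC mulr1 e0 e3 !mul0r subr0.
have hW3 : W3 = 0.
  have : W3 * (C2 ^+ 2 + S2 ^+ 2) = dq0 * S2 + dq3 * C2 by rewrite /W3; ring.
  by rewrite hC mulr1 e0 e3 !mul0r addr0.
have hW1 : W1 = 0.
  have : W1 * (C2 ^+ 2 + S2 ^+ 2) = dq1 * C2 + dq2 * S2 by rewrite /W1; ring.
  by rewrite hC mulr1 e1 e2 !mul0r addr0.
have hW2 : W2 = 0.
  have : W2 * (C2 ^+ 2 + S2 ^+ 2) = dq2 * C2 - dq1 * S2 by rewrite /W2; ring.
  by rewrite hC mulr1 e1 e2 !mul0r subr0.
have sg0 : sg != 0 by rewrite mulf_neq0 // invr_eq0.
have k0 : Y1 * h1 + Y2 * h2 = 0.
  have : W0 * r = S1 * (dT * Y3 - (Y1 * h1 + Y2 * h2 + Y3 * h3)).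
    by rewrite /W0; field.
  rewrite hW0 mul0r h3E => /esym /eqP; rewrite mulf_eq0 (negbTE hS1) /= subr_eq0 => /eqP h.
  have -> : Y1 * h1 + Y2 * h2 = (Y1 * h1 + Y2 * h2 + Y3 * dT) - dT * Y3 by ring.
  by rewrite -h subrr.
have hY12 : 0 < Y1 * Y1 + Y2 * Y2.
  have -> : Y1 * Y1 + Y2 * Y2 = (t * t / 4) * (a1 ^+ 2 + a3 ^+ 2) :> R by field.
  by rewrite mulr_gt0 // mulr_gt0 // mulr_gt0.
have dsg0 : dsg = 0.
  have : W1 * Y1 + W2 * Y2 = dsg * (Y1 * Y1 + Y2 * Y2) + sg * (Y1 * h1 + Y2 * h2) by rewrite /W1 /W2; ring.
  rewrite hW1 hW2 k0 !mul0r addr0 mulr0 addr0 => /esym /eqP; rewrite mulf_eq0 (gt_eqF hY12) orbF.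
  by move/eqP.
have dT0 : dT = 0.
  have : W3 * r = dT * (S1 - r * C1).
    by rewrite /W3 dsg0 h3E; field.
  by rewrite hW3 mul0r => /esym /eqP; rewrite mulf_eq0 (negbTE hS1r) orbF => /eqP.
have hh1 : h1 = 0.
  move: hW1; rewrite /W1 dsg0 dT0 !mul0r add0r subr0 => /eqP; rewrite mulf_eq0 (negbTE sg0) /=.
  by move/eqP.
have hh2 : h2 = 0.
  move: hW2; rewrite /W2 dsg0 dT0 !mul0r add0r addr0 => /eqP; rewrite mulf_eq0 (negbTE sg0) /=.
  by move/eqP.
have t0 : t != 0 by rewrite gt_eqF.
have dt0 : dt = 0.
  have : t * (a1 * d1 + a2 * d2 + a3 * d3) =
     2 * (a1 * h1 + a3 * h2) + a2 * dtau - dt * (a1 ^+ 2 + a2 ^+ 2 + a3 ^+ 2) by field.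
  by rewrite etg hh1 hh2 etau hS; lra.
have z1 : t * d1 = 0 by move: hh1; rewrite dt0; lra.
have z3 : t * d3 = 0 by move: hh2; rewrite dt0; lra.
have z2 : t * d2 = 0 by move: etau; rewrite dt0; lra.
have zb : t * db = 0 by move: dT0; rewrite dt0; lra.
move: z1 z2 z3 zb => /eqP; rewrite mulf_eq0 (negbTE t0) => /eqP ->.
move=> /eqP; rewrite mulf_eq0 (negbTE t0) => /eqP ->.
move=> /eqP; rewrite mulf_eq0 (negbTE t0) => /eqP ->.
by move=> /eqP; rewrite mulf_eq0 (negbTE t0) => /eqP ->.
Qed.

Lemma alg_bwd0 : d1 = a3 -> d2 = 0 -> d3 = - a1 -> db = 0 -> dt = 0 -> S1 = 0 ->
  r != 0 -> [/\ dq0 = 0, dq1 = 0, dq2 = 0, dq3 = 0 & dtau = 0].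
Proof. by move=> -> -> -> -> -> -> r0; split; field. Qed.

Lemma alg_bwd1 : d1 = a3 -> d2 = 0 -> d3 = - a1 -> db = 2 / t -> dt = 0 -> S1 = r * C1 ->
  r != 0 -> t != 0 -> [/\ dq0 = 0, dq1 = 0, dq2 = 0, dq3 = 0 & dtau = 0].
Proof. by move=> -> -> -> -> -> -> r0 t0; split; field; rewrite ?r0 ?t0.  Qed.
End Alg.

Lemma FFlin (R : realType) (a b c d e : R) : FF a b c d e = a *: FF 1 0 0 0 0 + b *: FF 0 1 0 0 0
   + c *: FF 0 0 1 0 0 + d *: FF 0 0 0 1 0 + e *: FF 0 0 0 0 1.
Proof. by rewrite !FFZ !FFD; congr FF; ring. Qed.

Lemma dExpi (R : realType) (i : nat) (x v : 'rV[R]_5) :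
  0 < yf1 x * yf1 x + yf2 x * yf2 x + yf3 i x * yf3 i x ->
  'd (Expi i) x v = FF (dq0 i x v) (dq1 i x v) (dq2 i x v) (dq3 i x v) (de x v).
Proof.
move=> hpos.
have eqE : @Expi R i = (fun p : 'rV[R]_5 => q0 i p *: FF 1 0 0 0 0 + q1 i p *: FF 0 1 0 0 0
   + q2 i p *: FF 0 0 1 0 0 + q3 i p *: FF 0 0 0 1 0 + ef p *: FF 0 0 0 0 1).
  by rewrite boolp.funeqE => p /=; rewrite Expi_closed FFlin.
have H : HD (fun p : 'rV[R]_5 => q0 i p *: FF 1 0 0 0 0 + q1 i p *: FF 0 1 0 0 0
   + q2 i p *: FF 0 0 1 0 0 + q3 i p *: FF 0 0 0 1 0 + ef p *: FF 0 0 0 0 1) x v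
   (dq0 i x v *: FF 1 0 0 0 0 + dq1 i x v *: FF 0 1 0 0 0
   + dq2 i x v *: FF 0 0 1 0 0 + dq3 i x v *: FF 0 0 0 1 0 + de x v *: FF 0 0 0 0 1).
  apply: HD_add; first apply: HD_add; first apply: HD_add; first apply: HD_add.
  - by apply: HD_scalel; apply: HD_q0.
  - by apply: HD_scalel; apply: HD_q1.
  - by apply: HD_scalel; apply: HD_q2.
  - by apply: HD_scalel; apply: HD_q3.
  - by apply: HD_scalel; apply: HD_ef.
by rewrite eqE; case: H => _ ->; rewrite -FFlin.
Qed.

Lemma rv5_eq0 (R : realType) (v : 'rV[R]_5) :
  crd v 0 = 0 -> crd v 1 = 0 -> crd v 2 = 0 -> crd v 3 = 0 -> crd v 4 = 0 -> v = 0.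
Proof.
move=> h0 h1 h2 h3 h4; apply/matrixP => i j; rewrite [i]ord1 mxE.
have -> : j = inord j by rewrite inord_val.
by case: j => [[|[|[|[|[|]]]]] ?] //=.
Qed.

Lemma crd_row (R : realType) (l : seq R) k : (k < 5)%N ->
  crd (\row_(k0 < 5) l`_k0) k = l`_k.
Proof. by move=> hk; rewrite /crd mxE inordK. Qed.

Lemma crd0 (R : realType) k : crd (0 : 'rV[R]_5) k = 0.
Proof. by rewrite /crd mxE. Qed.

Unset Implicit Arguments.

Theorem proposition4 (R : realType) (i : nat) (hi : i = 1%N \/ i = 2%N)
  (a1 a2 a3 b : R) (hS : a1 ^+ 2 + a2 ^+ 2 + a3 ^+ 2 = 1)
  (h2 : a2 != 1 /\ a2 != -1) (t : R) (ht : 0 < t) :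
  conjugate_time i a1 a2 a3 b t <->
  let s := wi i a2 b * t / 2 in sin s * (sin s - s * cos s) = 0.
Proof.
rewrite /conjugate_time /=.
set p := \row_(k < 5) _.
have c0 : crd p 0 = a1 by rewrite crd_row.
have c1 : crd p 1 = a2 by rewrite crd_row.
have c2 : crd p 2 = a3 by rewrite crd_row.
have c3 : crd p 3 = b by rewrite crd_row.
have c4 : crd p 4 = t by rewrite crd_row.
have h13 : 0 < a1 ^+ 2 + a3 ^+ 2.
  have ha2 : a2 ^+ 2 != 1 by rewrite sqrf_eq1 negb_or; case: h2 => -> ->.
  have q1 := sqr_ge0 a1; have q3 := sqr_ge0 a3.
  have : a2 ^+ 2 < 1 by rewrite lt_neqAle ha2 /=; lra.
  lra.
have e13 : a1 ^+ 2 + a3 ^+ 2 = 1 - a2 ^+ 2 by lra.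
have hpos : 0 < yf1 p * yf1 p + yf2 p * yf2 p + yf3 i p * yf3 i p.
  rewrite /yf1 /yf2 /yf3 c0 c1 c2 c3 c4.
  set z := b - _ * a2.
  have -> : t * a1 / 2 * (t * a1 / 2) + t * a3 / 2 * (t * a3 / 2) + t * z / 2 * (t * z / 2)
     = (t * t / 4) * (a1 ^+ 2 + a3 ^+ 2) + (t * z / 2) ^+ 2 by field.
  have := sqr_ge0 (t * z / 2).
  have : 0 < t * t / 4 * (a1 ^+ 2 + a3 ^+ 2) by rewrite mulr_gt0 // mulr_gt0 // mulr_gt0.
  lra.
have rpos : 0 < rhof i p by rewrite /rhof sqrtr_gt0.
have rhoE : rhof i p = wi i a2 b * t / 2.
  rewrite /rhof /wi /yf1 /yf2 /yf3 c0 c1 c2 c3 c4 /cc.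
  have hW : forall z : R, t * a1 / 2 * (t * a1 / 2) + t * a3 / 2 * (t * a3 / 2)
      + t * z / 2 * (t * z / 2) = (t / 2) ^+ 2 * (1 - a2 ^+ 2 + z ^+ 2).
    by move=> z; rewrite -e13; field.
  have sq : forall W : R, Num.sqrt ((t / 2) ^+ 2 * W) = Num.sqrt W * t / 2.
    move=> W; rewrite sqrtrM ?sqr_ge0 // sqrtr_sqr ger0_norm; last by rewrite divr_ge0 // ltW.
    by rewrite mulrC mulrA.
  by case: hi => ->; rewrite /= ?mul1r ?mul0r ?subr0 hW sq.
rewrite -rhoE.
have C2E : cos (thf p) ^+ 2 + sin (thf p) ^+ 2 = 1 by exact: cos2Dsin2.
have ht' : 0 < crd p 4 by rewrite c4.
have hS' : crd p 0 ^+ 2 + crd p 1 ^+ 2 + crd p 2 ^+ 2 = 1 by rewrite c0 c1 c2.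
have h13' : 0 < crd p 0 ^+ 2 + crd p 2 ^+ 2 by rewrite c0 c2.
have r0 : rhof i p != 0 by rewrite gt_eqF.
have t0 : crd p 4 != 0 by rewrite gt_eqF.
split.
  case=> v [v0 [tg dE]].
  rewrite dExpi // in dE; case/FF_eq0: dE => e0 e1 e2 e3 e4.
  have etau : dtau p v = 0.
    move: e4; rewrite /de => /eqP; rewrite mulf_eq0 (gt_eqF (expR_gt0 _)) /=.
    by move/eqP.
  apply/eqP; rewrite mulf_eq0; apply/negPn/negP => /norP [hs1 hs2].
  have [z0 z1 z2 z3 z4] := alg_fwd (a1 := crd p 0) (a2 := crd p 1) (a3 := crd p 2) (b := crd p 3)
    (t := crd p 4) (c := cc R i) (d1 := crd v 0) (d2 := crd v 1) (d3 := crd v 2) (db := crd v 3)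
    (dt := crd v 4) (r := rhof i p) (S1 := sin (rhof i p)) (C1 := cos (rhof i p))
    (S2 := sin (thf p)) (C2 := cos (thf p)) ht' rpos C2E hS' h13' hs1 hs2 e0 e1 e2 e3 etau tg.
  by move: v0; rewrite (rv5_eq0 z0 z1 z2 z3 z4) eqxx.
move=> /eqP; rewrite mulf_eq0 => /orP [/eqP hs | ].
  pose v := \row_(k < 5) [:: a3; 0; - a1; 0; 0]`_k.
  have cv0 : crd v 0 = a3 by rewrite crd_row.
  have cv1 : crd v 1 = 0 by rewrite crd_row.
  have cv2 : crd v 2 = - a1 by rewrite crd_row.
  have cv3 : crd v 3 = 0 by rewrite crd_row.
  have cv4 : crd v 4 = 0 by rewrite crd_row.
  exists v; split.
    apply/eqP => hv.
    move: (congr1 (fun w => crd w 0) hv) (congr1 (fun w => crd w 2) hv) => /=.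
    rewrite cv0 cv2 !crd0 => ha3 /eqP; rewrite oppr_eq0 => /eqP ha1.
    by move: h13; rewrite ha1 ha3 expr0n /= addr0 ltxx.
  split.
    by rewrite /tangentC c0 c1 c2 cv0 cv1 cv2; ring.
  have [e0 e1 e2 e3 etau] := @alg_bwd0 R (crd p 0) (crd p 1) (crd p 2) (crd p 3)
    (crd p 4) (cc R i) (crd v 0) (crd v 1) (crd v 2) (crd v 3)
    (crd v 4) (rhof i p) (sin (rhof i p)) (cos (rhof i p))
    (sin (thf p)) (cos (thf p))
    ltac:(by rewrite cv0 c2) cv1 ltac:(by rewrite cv2 c0) cv3 cv4 hs r0.
  have e0' : dq0 i p v = 0 := e0.
  have e1' : dq1 i p v = 0 := e1.
  have e2' : dq2 i p v = 0 := e2.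
  have e3' : dq3 i p v = 0 := e3.
  have e4' : de p v = 0 by rewrite /de; have -> : dtau p v = 0 := etau; rewrite mulr0.
  by rewrite dExpi // e0' e1' e2' e3' e4' FF0.
rewrite subr_eq0 => /eqP hs.
pose v := \row_(k < 5) [:: a3; 0; - a1; 2 / t; 0]`_k.
have cv0 : crd v 0 = a3 by rewrite crd_row.
have cv1 : crd v 1 = 0 by rewrite crd_row.
have cv2 : crd v 2 = - a1 by rewrite crd_row.
have cv3 : crd v 3 = 2 / t by rewrite crd_row.
have cv4 : crd v 4 = 0 by rewrite crd_row.
exists v; split.
  apply/eqP => hv.
  move: (congr1 (fun w => crd w 0) hv) (congr1 (fun w => crd w 2) hv) => /=.
  rewrite cv0 cv2 !crd0 => ha3 /eqP; rewrite oppr_eq0 => /eqP ha1.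
  by move: h13; rewrite ha1 ha3 expr0n /= addr0 ltxx.
split.
  by rewrite /tangentC c0 c1 c2 cv0 cv1 cv2; ring.
have [e0 e1 e2 e3 etau] := @alg_bwd1 R (crd p 0) (crd p 1) (crd p 2) (crd p 3)
  (crd p 4) (cc R i) (crd v 0) (crd v 1) (crd v 2) (crd v 3)
  (crd v 4) (rhof i p) (sin (rhof i p)) (cos (rhof i p))
  (sin (thf p)) (cos (thf p))
  ltac:(by rewrite cv0 c2) cv1 ltac:(by rewrite cv2 c0) ltac:(by rewrite cv3 c4) cv4 hs r0 t0.
have e0' : dq0 i p v = 0 := e0.
have e1' : dq1 i p v = 0 := e1.
have e2' : dq2 i p v = 0 := e2.
have e3' : dq3 i p v = 0 := e3.
have e4' : de p v = 0 by rewrite /de; have -> : dtau p v = 0 := etau; rewrite mulr0.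
by rewrite dExpi // e0' e1' e2' e3' e4' FF0.
Qed.
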